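(* Let $c>1$. Then for all sufficiently small $\alpha>0$ and all $\lambda>\lambda(\alpha)$ (a threshold depending on $\alpha$ and $c$), there exist a probability space with an $\alpha$-homogeneous atomic filtration and a function $f\in L^1$ with $\|Sf\|_\infty=1$ such that \[ \bigl|\{x\in\mathcal{X}: f(x)>\lambda\}\bigr|>e^{-c\alpha\lambda^2}. \]
   Context: An atomic filtration on a probability space $(\mathcal{X},\mathcal{F},\sigma)$ is an increasing sequence of $\sigma$-algebras $\mathcal{F}_n\subset\mathcal{F}$, $n\ge0$, with $\mathcal{F}_0=\{\varnothing,\mathcal{X}\}$, $\mathcal{F}$ generated by the $\mathcal{F}_n$, and such that for each $n$ there is a countable collection $\mathcal{D}_n$ of disjoint sets (''cubes'') with every set of $\mathcal{F}_n$ a union of sets of $\mathcal{D}_n$. Write $\mathcal{D}=\bigcup_n\mathcal{D}_n$, $|A|=\sigma(A)$, and for $Q\in\mathcal{D}_n$ let $\operatorname{ch}Q=\{R\in\mathcal{D}_{n+1}:R\subset Q\}$. The filtration is $\alpha$-homogeneous ($0<\alpha\le1/2$) if $|Q'|\ge\alpha|Q|$ for every cube $Q$ and every $Q'\in\operatorname{ch}Q$. For $|A|>0$, $\langle f\rangle_A=|A|^{-1}\int_A f$. Let $\mathbf{E}_Q f=\langle f\rangle_Q\mathbf{1}_Q$, $\Delta_Q=\sum_{R\in\operatorname{ch}Q}\mathbf{E}_R-\mathbf{E}_Q$, and $S f=\bigl(\sum_{Q\in\mathcal{D}}|\Delta_Q f|^2\bigr)^{1/2}$. *)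

(* Defs.v *)
From HB Require Import structures.
From mathcomp Require Import all_boot all_order all_algebra.
From mathcomp Require Import all_classical all_reals all_analysis.
From mathcomp Require Import ess_sup_inf.
Set Implicit Arguments. Unset Strict Implicit. Unset Printing Implicit Defensive.
Import Order.TTheory GRing.Theory Num.Theory.
Import numFieldNormedType.Exports.
Local Open Scope classical_set_scope.
Local Open Scope ring_scope.

Section atomic_filtrations.
Context {d : measure_display} {T : measurableType d} {R : realType}.
Variable P : probability T R.

Definition atomic_filtration (F D : nat -> set (set T)) : Prop :=
  [/\ (forall n, sigma_algebra setT (F n)),
      (forall n, F n `<=` measurable),
      (forall n, F n `<=` F n.+1) /\ F 0%N = [set set0; setT],
      (@measurable d T = <<s \bigcup_n F n >>) &
      (forall n, [/\ countable (D n), D n `<=` F n,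
          (forall Q Q', D n Q -> D n Q' -> Q <> Q' -> Q `&` Q' = set0) &
          (forall A, F n A -> exists C, C `<=` D n /\ A = \bigcup_(Q in C) Q)])].

Definition ch (D : nat -> set (set T)) (n : nat) (Q : set T) : set (set T) :=
  [set R | D n.+1 R /\ R `<=` Q].

Definition homogeneous (D : nat -> set (set T)) (alpha : R) : Prop :=
  [/\ 0 < alpha, alpha <= 2^-1 &
      forall n Q Q', D n Q -> ch D n Q Q' -> (alpha%:E * P Q <= P Q')%E].

Definition avg (A : set T) (f : T -> R) : R :=
  (fine (P A))^-1 * fine (\int[P]_(x in A) (f x)%:E)%E.

Definition EQ (Q : set T) (f : T -> R) : T -> R :=
  fun x => avg Q f * \1_Q x.

(** Delta_Q f = sum_{R in ch Q} E_R f - E_Q f ; the sum over the disjoint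
    children has at most one nonzero term at each point (finite support sum). *)
Definition DeltaQ (D : nat -> set (set T)) (n : nat) (Q : set T)
    (f : T -> R) : T -> R :=
  fun x => (\sum_(Rc \in ch D n Q) EQ Rc f x) - EQ Q f x.

Definition esqrt (y : \bar R) : \bar R :=
  match y with
  | r%:E => (Num.sqrt r)%:E
  | +oo%E => +oo%E
  | -oo%E => 0%E
  end.

Definition Sfun (D : nat -> set (set T)) (f : T -> R) : T -> \bar R :=
  fun x => esqrt (\esum_(nQ in [set nQ : nat * set T | D nQ.1 nQ.2])
                    ((DeltaQ D nQ.1 nQ.2 f x) ^+ 2)%:E).

End atomic_filtrations.

(* Main.v *)
Require Import Defs.
From HB Require Import structures.
From mathcomp Require Import all_boot all_order all_algebra.
From mathcomp Require Import all_classical all_reals all_analysis.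
From mathcomp Require Import ess_sup_inf.
From mathcomp Require Import zify ring lra measurable_realfun.
Set Implicit Arguments. Unset Strict Implicit. Unset Printing Implicit Defensive.
Import Order.TTheory GRing.Theory Num.Theory.
Import numFieldNormedType.Exports.
Local Open Scope classical_set_scope.
Local Open Scope ring_scope.
Definition Gm (M : nat) : set (set nat) :=
  [set A | forall k, (M <= k)%N -> (A k <-> A M)].
Definition Fam (N n : nat) : set (set nat) := Gm (minn n N).
Definition Gall N := \bigcup_n Fam N n.
Notation TT N := (g_sigma_algebraType (Gall N)).
Definition tail (m : nat) : set nat := [set k | (m <= k)%N].
Definition cube (m k : nat) : set nat := if (k < m)%N then [set k] else tail m.
Definition Dn (N n : nat) : set (set nat) := range (cube (minn n N)).

Lemma Gm_sigma M : sigma_algebra setT (Gm M).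
Proof.
split.
- by move=> k _; split.
- move=> A HA k Mk; rewrite /setD /=; split => -[_ H]; split => //; move: H;
  by rewrite (HA k Mk).
- move=> A HA k Mk; split => -[i _ Hi]; exists i => //; first by rewrite -(HA i k Mk).
  by rewrite (HA i k Mk).
Qed.

Lemma Gm_mono M M' : (M <= M')%N -> Gm M `<=` Gm M'.
Proof.
move=> MM' A HA k Mk; rewrite (HA k) ?(HA M') //; exact: leq_trans Mk.
Qed.

Lemma Gm0 : Gm 0 = [set set0; setT].
Proof.
apply/seteqP; split => A.
- move=> HA; have [A0|nA0] := pselect (A 0%N).
    right; apply/seteqP; split => // k _; by rewrite (HA k).
  left; apply/seteqP; split => // k Ak; apply: nA0; by rewrite -(HA k).
- by case => -> k _.
Qed.

Lemma cube_mem m k : cube m k k.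
Proof. by rewrite /cube; case: ifP => // /negbT; rewrite -leqNgt. Qed.

Lemma cube_Gm m k : Gm m (cube m k).
Proof.
move=> j mj; rewrite /cube; case: ifP => km.
  split => E; exfalso; [rewrite E leqNgt km in mj|rewrite E ltnn in km] => //.
by rewrite /tail /=; split.
Qed.

Lemma cube_sub m k A : Gm m A -> A k -> cube m k `<=` A.
Proof.
move=> HA Ak; rewrite /cube; case: ifP => km; first by move=> j ->.
move=> j /= mj; rewrite (HA j mj) -(HA k) //; rewrite leqNgt km //.
Qed.

Lemma cube_disj m k k' : cube m k <> cube m k' -> cube m k `&` cube m k' = set0.
Proof.
rewrite /cube; case: ifP => km; case: ifP => k'm // ne.
- apply/seteqP; split => // x [/= E1 E2]; apply: ne; by rewrite -E1 -E2.
- apply/seteqP; split => // x [/= E1]; rewrite /tail /= E1 leqNgt km //.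
- apply/seteqP; split => // x [] ; rewrite /tail /= => + E; by rewrite E leqNgt k'm.
Qed.

Lemma atomicF N :
  @atomic_filtration _ (TT N) (Fam N) (Dn N).
Proof.
split.
- move=> n; exact: Gm_sigma.
- move=> n A HA; apply: sub_gen_smallest; rewrite /Gall /=. by exists n.
- split; first by move=> n; apply: Gm_mono; lia.
  by rewrite /Fam min0n Gm0.
- by [].
- move=> n; split.
  + apply: sub_countable; first exact: card_image_le. exact: countableP.
  + move=> Q [k _ <-]; exact: cube_Gm.
  + move=> Q Q' [k _ <-] [k' _ <-]; exact: cube_disj.
  + move=> A HA; exists [set Q | Dn N n Q /\ Q `<=` A]; split; first by move=> Q [].
    apply/seteqP; split => [x Ax|x [Q [_ QA] Qx]]; last exact: QA.
    exists (cube (minn n N) x); last exact: cube_mem.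
    split; first by exists x.
    exact: cube_sub.
Qed.

Lemma in_tail m k : (k \in tail m) = (m <= k)%N.
Proof. by apply/idP/idP => [/set_mem|H]; [|apply/mem_set]. Qed.

Lemma in_set1n (j k : nat) : (k \in [set j]) = (k == j).
Proof. by apply/idP/idP => [/set_mem/= ->|/eqP ->]; [|apply/mem_set]. Qed.

Lemma down_ind N (Pr : nat -> Prop) : Pr N -> (forall m, (m < N)%N -> Pr m.+1 -> Pr m) ->
  forall m, (m <= N)%N -> Pr m.
Proof.
move=> HN Hs m Hm; have := subnK Hm; move: (N - m)%N => j.
elim: j m Hm => [|j IH] m Hm E; first by rewrite add0n in E; rewrite E.
apply: Hs; first lia.
apply: IH; lia.
Qed.

Lemma mnorm1 (R : realType) d (T : measurableType d) (m : {measure set T -> \bar R})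
  (P : probability T R) U : m setT = 1%E -> mnormalize m P U = m U.
Proof.
move=> h; rewrite /mnormalize h /=.
have -> : ((1%:E : \bar R) == 0%E) = false by apply/negbTE; rewrite eqe oner_neq0.
by rewrite /= invr1 mule1.
Qed.

Lemma maxposneg (R : realType) (x : R) : Num.max x 0 - Num.max (- x) 0 = x.
Proof.
rewrite !maxElt; case: ifP => h1; case: ifP => h2; move: h1 h2.
all: rewrite ?oppr_lt0 => h1 h2.
all: lra.
Qed.

Section measure_part.
Variables (R : realType) (a s : R) (N : nat).
Hypothesis a0 : 0 < a.
Hypothesis a1 : a <= 2^-1.

Definition w (k : nat) : R := if (k < N)%N then a * (1 - a) ^+ k else (1 - a) ^+ N.
Definition wn k : {nonneg R} := NngNum (normr_ge0 (w k)).
Definition mu := msum (fun k => mscale (wn k) (@dirac _ (TT N) (k : TT N) R)) N.+1.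
Definition PP := mnormalize mu (@dirac _ (TT N) (0%N : TT N) R).
Definition Pval (A : set nat) : R := \sum_(k < N.+1) w k * ((k : nat) \in A)%:R.
Definition tsum (h : nat -> R) m := \sum_(m <= k < N.+1) h k.

Lemma a_1 : 0 < 1 - a.
Proof. have := a0; have := a1; lra. Qed.

Lemma w_ge0 k : 0 <= w k.
Proof.
have h := a_1; rewrite /w; case: ifP => _; last exact: exprn_ge0 (ltW h).
by rewrite mulr_ge0 ?(ltW a0) // exprn_ge0 // ltW.
Qed.

Lemma w_gt0 k : 0 < w k.
Proof.
have h := a_1; rewrite /w; case: ifP => _; last exact: exprn_gt0.
by rewrite mulr_gt0 // exprn_gt0.
Qed.

Lemma sum_tail (h : nat -> R) m : \sum_(k < N.+1) h k * ((k : nat) \in tail m)%:R = tsum h m.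
Proof.
rewrite /tsum big_geq_mkord [RHS]big_mkcond /=; apply: eq_bigr => k _.
by rewrite in_tail; case: (m <= k)%N; rewrite ?mulr1 ?mulr0.
Qed.

Lemma tsum_rec (h : nat -> R) m : (m <= N)%N -> tsum h m = h m + tsum h m.+1.
Proof. by move=> H; rewrite /tsum big_ltn. Qed.

Lemma tsum_end (h : nat -> R) : tsum h N.+1 = 0.
Proof. by rewrite /tsum big_geq. Qed.

Lemma tsum_w m : (m <= N)%N -> tsum w m = (1 - a) ^+ m.
Proof.
move: m; apply: (@down_ind N (fun m => tsum w m = (1 - a) ^+ m)).
  by rewrite tsum_rec // tsum_end addr0 /w ltnn.
move=> m mN IH; rewrite tsum_rec ?IH 1?ltnW // /w mN exprS; ring.
Qed.

Lemma Pval_T : Pval setT = 1.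
Proof.
have := tsum_w (leq0n N); rewrite expr0 -sum_tail => <-.
by apply: eq_bigr => k _; rewrite !in_setT in_tail.
Qed.

Lemma Pval_tail m : (m <= N)%N -> Pval (tail m) = (1 - a) ^+ m.
Proof. by move=> H; rewrite /Pval sum_tail tsum_w. Qed.

Lemma Pval_1 j : (j <= N)%N -> Pval [set j] = w j.
Proof.
move=> H; rewrite /Pval (bigD1 (Ordinal (H : (j < N.+1)%N)) ) //= big1 ?addr0.
  by rewrite in_set1n eqxx mulr1.
move=> k /eqP nk; rewrite in_set1n.
case: eqP => [kj|]; last by rewrite mulr0.
by exfalso; apply: nk; apply: val_inj.
Qed.

Lemma muE A : mu A = (Pval A)%:E.
Proof.
rewrite /mu /msum /Pval -sumEFin; apply: eq_bigr => k _.
transitivity ((wn k)%:num%:E * \d_(k : TT N) A)%E; first by [].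
by rewrite diracE /= ger0_norm ?w_ge0 // EFinM.
Qed.

Lemma PPE A : PP A = (Pval A)%:E.
Proof.
rewrite /PP mnorm1; first exact: muE.
have h := muE setT; rewrite Pval_T in h; exact: h.
Qed.

Definition PPp : probability (TT N) R := PP.

Lemma PPpE A : PPp A = (Pval A)%:E.
Proof. exact: PPE. Qed.

Lemma meas_tail (A : set (TT N)) : Gm N A -> measurable A.
Proof. move=> H; apply: sub_gen_smallest; exists N => //; by rewrite /Fam minnn. Qed.

Lemma mfun_tail d2 (T2 : measurableType d2) (g : TT N -> T2) :
  (forall k, (N <= k)%N -> g k = g N) -> measurable_fun setT g.
Proof.
move=> H _ Y mY; rewrite setTI; apply: meas_tail => k Nk /=.
by rewrite /preimage /= H.
Qed.

Lemma intE (A : set (TT N)) (mA : measurable A) (g : TT N -> R) :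
  (forall k, (N <= k)%N -> g k = g N) ->
  (\int[PPp]_(x in A) (g x)%:E = (\sum_(k < N.+1) w k * ((k:nat) \in A)%:R * g k)%:E)%E.
Proof.
move=> gt.
have mg : measurable_fun A (EFin \o g).
  apply: measurable_funTS; apply: mfun_tail => k Nk /=; by rewrite gt.
rewrite (eq_measure_integral mu); last by move=> B _ _; exact: (etrans (PPpE B) (esym (muE B))).
rewrite integralE.
rewrite !ge0_integral_measure_sum //; try solve [exact: measurable_funepos mg | exact: measurable_funeneg mg].
rewrite (eq_bigr (fun n : 'I_N.+1 => ((w n * ((n:nat) \in A)%:R * Num.max (g n) 0))%:E)); last first.
  move=> n _; rewrite ge0_integral_mscale //; [|exact: measurable_funepos].
  rewrite integral_dirac //; last exact: measurable_funepos.
  rewrite diracE funeposE /= -EFin_max -!EFinM ger0_norm ?w_ge0 //.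
  by rewrite mulrA.
rewrite [X in (_ - X)%E](eq_bigr (fun n : 'I_N.+1 => ((w n * ((n:nat) \in A)%:R * Num.max (- g n) 0))%:E)); last first.
  move=> n _; rewrite ge0_integral_mscale //; [|exact: measurable_funeneg].
  rewrite integral_dirac //; last exact: measurable_funeneg.
  rewrite diracE funenegE /= -EFin_max -!EFinM ger0_norm ?w_ge0 //.
  by rewrite mulrA.
rewrite !sumEFin -EFinB -sumrB; congr EFin; apply: eq_bigr => n _.
by rewrite -mulrBr maxposneg.
Qed.

Notation chT := (@ch _ (TT N) (Dn N)).

Lemma cube_lt m k : (k < m)%N -> cube m k = [set k].
Proof. by move=> h; rewrite /cube h. Qed.

Lemma cube_ge m k : (m <= k)%N -> cube m k = tail m.
Proof. by move=> h; rewrite /cube ltnNge h. Qed.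

Lemma ch_single n k : (k < minn n N)%N -> chT n [set k] = [set [set k]].
Proof.
move=> hk; apply/seteqP; split => Q'.
- move=> [[j _ <-] sub]; rewrite /cube in sub *; case: ifP => hj in sub *.
    by have /= -> := sub j erefl.
  have h1 := sub _ (leqnn (minn n.+1 N)); have h2 := sub _ (leqnSn (minn n.+1 N)).
  by move: h1 h2 => /= h1 h2; exfalso; lia.
- move=> /= ->; split => //; exists k => //; rewrite cube_lt //; lia.
Qed.

Lemma ch_tail_lt n : (n < N)%N -> chT n (tail n) = [set [set n]] `|` [set tail n.+1].
Proof.
move=> hn; have E : minn n.+1 N = n.+1 by lia.
apply/seteqP; split => Q'.
- move=> [[j _ <-] sub]; rewrite E in sub *; rewrite /cube in sub *.
  case: ifP => hj in sub *; last by right.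
  have /= h := sub j erefl; rewrite /tail /= in h; left => /=; congr [set _]; lia.
- move=> [|] /= ->; split.
  + by exists n => //; rewrite E cube_lt.
  + by move=> j /= ->; rewrite /tail /=.
  + by exists n.+1 => //; rewrite E cube_ge.
  + by move=> j; rewrite /tail /=; lia.
Qed.

Lemma ch_tail_ge n : (N <= n)%N -> chT n (tail N) = [set tail N].
Proof.
move=> hn; have E : minn n.+1 N = N by lia.
apply/seteqP; split => Q'.
- move=> [[j _ <-] sub]; rewrite E in sub *; rewrite /cube in sub *.
  case: ifP => hj in sub * => //.
  have /= h := sub j erefl; rewrite /tail /= in h; exfalso; lia.
- move=> /= ->; split => //; exists N => //; rewrite E cube_ge //.
Qed.

Definition fv (k : nat) : R :=
  if (k < N)%N then (k%:R * a - (1 - a)) * s else N%:R * a * s.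

Lemma fv_tail k : (N <= k)%N -> fv k = fv N.
Proof. by move=> h; rewrite /fv ltnn ltnNge h. Qed.

Lemma tsum_wf m : (m <= N)%N ->
  tsum (fun k => w k * fv k) m = m%:R * a * s * (1 - a) ^+ m.
Proof.
move: m; apply: (@down_ind N (fun m => tsum (fun k => w k * fv k) m = m%:R * a * s * (1 - a) ^+ m)).
  by rewrite tsum_rec // tsum_end addr0 /w /fv ltnn mulrC.
move=> m mN IH; rewrite tsum_rec ?IH 1?ltnW // /w /fv mN exprS -addn1 natrD; ring.
Qed.

Lemma sum_1 (h : nat -> R) j : (j <= N)%N ->
  \sum_(k < N.+1) h k * ((k : nat) \in [set j])%:R = h j.
Proof.
move=> H; rewrite (bigD1 (Ordinal (H : (j < N.+1)%N))) //= big1 ?addr0.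
  by rewrite in_set1n eqxx mulr1.
move=> k /eqP nk; rewrite in_set1n.
case: eqP => [kj|]; last by rewrite mulr0.
by exfalso; apply: nk; apply: val_inj.
Qed.

Lemma Gm_1 j : (j < N)%N -> Gm N [set j].
Proof. move=> hj k hk /=; split => E; lia. Qed.

Lemma Gm_tail m : (m <= N)%N -> Gm N (tail m).
Proof. move=> hm k hk; rewrite /tail /=; split => _; lia. Qed.

Lemma avg_1 j : (j < N)%N -> avg PPp [set j] fv = fv j.
Proof.
move=> hj; rewrite /avg PPpE intE /=; last exact: fv_tail.
  have hj' : (j <= N)%N by exact: ltnW.
  rewrite Pval_1 //.
  rewrite (eq_bigr (fun k : 'I_N.+1 => (w k * fv k) * ((k:nat) \in [set j])%:R)); last first.
    by move=> k _; rewrite mulrAC.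
  rewrite (sum_1 (fun k => w k * fv k)) // mulKf //; exact: lt0r_neq0 (w_gt0 j).
apply: meas_tail. exact: Gm_1.
Qed.

Lemma avg_tail m : (m <= N)%N -> avg PPp (tail m) fv = m%:R * a * s.
Proof.
move=> hm; rewrite /avg PPpE intE /=; last exact: fv_tail.
  rewrite Pval_tail //.
  rewrite (eq_bigr (fun k : 'I_N.+1 => (w k * fv k) * ((k:nat) \in tail m)%:R)); last first.
    by move=> k _; rewrite mulrAC.
  rewrite (sum_tail (fun k => w k * fv k)) tsum_wf // mulrC mulfK //.
  by apply: lt0r_neq0; apply: exprn_gt0; exact: a_1.
apply: meas_tail; exact: Gm_tail.
Qed.

Definition delta (n x : nat) : R :=
  if x == n then - ((1 - a) * s) else if (n < x)%N then a * s else 0.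

Lemma Delta_single n k x : (k < minn n N)%N -> DeltaQ PPp (Dn N) n [set k] fv x = 0.
Proof. by move=> h; rewrite /DeltaQ ch_single // fsbig_set1 subrr. Qed.

Lemma Delta_tailN n x : (N <= n)%N -> DeltaQ PPp (Dn N) n (tail N) fv x = 0.
Proof. by move=> h; rewrite /DeltaQ ch_tail_ge // fsbig_set1 subrr. Qed.

Lemma Delta_tail n x : (n < N)%N -> DeltaQ PPp (Dn N) n (tail n) fv x = delta n x.
Proof.
move=> hn.
have disj : [set [set n]] `&` [set tail n.+1] `<=` (set0 : set (set (TT N))).
  move=> Q [/= -> E]; have : [set n] n.+1 by rewrite E /tail /=.
  by move=> /= h; lia.
rewrite /DeltaQ ch_tail_lt // fsbigU0 //; try exact: finite_set1.
have hn' : (n <= N)%N by exact: ltnW.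
rewrite !fsbig_set1 /EQ avg_1 // !avg_tail // !indicE in_set1n !in_tail /delta.
rewrite /fv hn.
case: (ltngtP x n) => h /=; rewrite ?mulr0 ?mulr1 -?natr1; ring.
Qed.

Lemma sum_delta M x : \sum_(n < M) (delta n x)^+2 =
  (minn x M)%:R * (a * s)^+2 + (x < M)%N%:R * ((1 - a) * s)^+2.
Proof.
elim: M => [|M IH]; first by rewrite big_ord0 minn0 ltn0 !mul0r addr0.
rewrite big_ord_recr /= IH /delta.
have [h|[h|h]] : ((x < M) \/ (M < x) \/ x = M)%N by lia.
- have -> : (x == M) = false by apply/negbTE; lia.
  have -> : (M < x)%N = false by apply/negbTE; lia.
  have -> : minn x M.+1 = minn x M by lia.
  have -> : (x < M.+1)%N = true by lia.
  have -> : (x < M)%N = true by lia.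
  by rewrite expr0n /= addr0.
- have -> : (x == M) = false by apply/negbTE; lia.
  have -> : (M < x)%N = true by lia.
  have -> : minn x M.+1 = (minn x M).+1 by lia.
  have -> : (x < M.+1)%N = false by apply/negbTE; lia.
  have -> : (x < M)%N = false by apply/negbTE; lia.
  rewrite -natr1; ring.
- rewrite h eqxx minnn ltnn.
  have -> : minn M M.+1 = M by lia.
  rewrite ltnSn /=; ring.
Qed.

Definition Apairs : set (nat * set (TT N)) := [set nQ | Dn N nQ.1 nQ.2].
Definition Bpairs : set (nat * set (TT N)) := (fun n => (n, tail n)) @` `I_N.

Lemma esum_S x : (\esum_(nQ in Apairs) ((DeltaQ PPp (Dn N) nQ.1 nQ.2 fv x) ^+ 2)%:E =
  (\sum_(n < N) (delta n x)^+2)%:E)%E.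
Proof.
rewrite (esumID Bpairs); last by move=> i _; rewrite lee_fin sqr_ge0.
rewrite [X in (_ + X)%E]esum1 ?adde0; last first.
  move=> [n Q] [[k _ EQ] nB] /=; rewrite /= in EQ.
  case: (ltnP k (minn n N)) => hk.
    by rewrite -EQ cube_lt // Delta_single // expr0n.
  rewrite -EQ cube_ge //.
  case: (ltnP n N) => hn.
    exfalso; apply: nB; exists n => //; rewrite -EQ cube_ge //; congr (_, tail _); lia.
  by rewrite Delta_tailN // expr0n.
rewrite setIidr; last first.
  move=> _ [n hn <-]; exists n => //=; rewrite cube_ge; [congr tail|]; rewrite /= in hn; lia.
rewrite esum_image; last by move=> i j _ _ [].
rewrite (eq_esum (b := fun n => ((delta n x)^+2)%:E)); last first.
  by move=> n hn /=; rewrite Delta_tail.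
rewrite esum_fset; [|exact: finite_II|by move=> i _; rewrite lee_fin sqr_ge0].
by rewrite -fsbig_ord sumEFin.
Qed.

Lemma Pval_ge0 A : 0 <= Pval A.
Proof. by apply: sumr_ge0 => k _; rewrite mulr_ge0 ?w_ge0 ?ler0n. Qed.

Lemma Pval_ge j (A : set nat) : (j <= N)%N -> A j -> w j <= Pval A.
Proof.
move=> H Aj; rewrite /Pval (bigD1 (Ordinal (H : (j < N.+1)%N))) //= mem_set // mulr1.
by rewrite lerDl; apply: sumr_ge0 => k _; rewrite mulr_ge0 ?w_ge0 ?ler0n.
Qed.

Lemma S_val x : Sfun PPp (Dn N) fv x =
  (Num.sqrt ((minn x N)%:R * (a * s)^+2 + (x < N)%N%:R * ((1 - a) * s)^+2))%:E.
Proof. by rewrite /Sfun; have := esum_S x; rewrite /Apairs => ->; rewrite /= sum_delta. Qed.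

Lemma homog : homogeneous PPp (Dn N) a.
Proof.
split => //.
move=> n Q Q' [k _ <-] hch; rewrite !PPpE -EFinM lee_fin.
have a1' : a <= 1 by have := a1; have := a0; lra.
case: (ltnP k (minn n N)) => hk.
  rewrite cube_lt // in hch *; rewrite ch_single // in hch; rewrite /= in hch; rewrite hch.
  by apply: ler_piMl => //; exact: Pval_ge0.
rewrite cube_ge // in hch *.
case: (ltnP n N) => hn.
  have E : minn n N = n by lia.
  rewrite E in hch *; rewrite ch_tail_lt // in hch.
  have hn' : (n <= N)%N by exact: ltnW.
  case: hch => /= ->; rewrite Pval_tail //.
    by rewrite Pval_1 // /w hn.
  rewrite Pval_tail // exprS ler_wpM2r //; last by have := a1; lra.
  by apply: exprn_ge0; have := a_1; lra.
have E : minn n N = N by lia.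
rewrite E in hch *; rewrite ch_tail_ge // in hch; rewrite /= in hch; rewrite hch.
by apply: ler_piMl => //; exact: Pval_ge0.
Qed.

Lemma fv_int : PPp.-integrable setT (EFin \o fv).
Proof.
apply/integrableP; split.
  by apply: mfun_tail => k hk /=; rewrite fv_tail.
rewrite (eq_integral (fun x : TT N => (`|fv x|)%:E)) //.
by rewrite (intE measurableT (g := fun x => `|fv x|)) ?ltry // => k hk; rewrite fv_tail.
Qed.

Lemma fv_mean : fine (\int[PPp]_x (fv x)%:E)%E = 0.
Proof.
rewrite (intE measurableT (g := fv)) /=; last exact: fv_tail.
rewrite (eq_bigr (fun k : 'I_N.+1 => (w k * fv k) * ((k:nat) \in tail 0)%:R)); last first.
  by move=> k _; rewrite in_setT in_tail mulr1 mulr1.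
by rewrite (sum_tail (fun k => w k * fv k)) tsum_wf // mul0r !mul0r.
Qed.

Hypothesis N0 : (0 < N)%N.
Hypothesis sK : s^+2 * ((N.-1)%:R * a^+2 + (1 - a)^+2) = 1.

Definition V x := (minn x N)%:R * (a * s)^+2 + (x < N)%N%:R * ((1 - a) * s)^+2.

Lemma V_le1 x : V x <= 1.
Proof.
have K : (N.-1)%:R * (a * s)^+2 + ((1 - a) * s)^+2 = 1.
  by rewrite -[RHS]sK; ring.
have A2 : 0 <= (a * s)^+2 by exact: sqr_ge0.
have AB : (a * s)^+2 <= ((1 - a) * s)^+2.
  rewrite !exprMn ler_wpM2r ?sqr_ge0 //.
  rewrite ler_sqr ?nnegrE; have := a1; have := a0; lra.
rewrite /V; case: (ltnP x N) => hx.
  have hxN : (x%:R : R) <= (N.-1)%:R by rewrite ler_nat; lia.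
  rewrite mul1r -[X in _ <= X]K lerD2r; apply: ler_wpM2r => //.
rewrite mul0r addr0 -[X in _ <= X]K -{1}(prednK N0) -natr1 mulrDl mul1r lerD2l //.
Qed.

Lemma V_top : V N.-1 = 1.
Proof.
rewrite /V -[RHS]sK.
have -> : minn N.-1 N = N.-1 by lia.
have -> : (N.-1 < N)%N = true by lia.
rewrite mul1r; ring.
Qed.

Lemma ess : ess_sup PPp (Sfun PPp (Dn N) fv) = 1%E.
Proof.
apply/eqP; rewrite eq_le; apply/andP; split.
  apply/ess_supP; apply: nearW => x; rewrite S_val lee_fin -[X in _ <= X]sqrtr1 ler_sqrt //.
  exact: V_le1.
rewrite leNgt; apply/negP => H.
have [A [mA PA sub]] := ess_sup_ge PPp (Sfun PPp (Dn N) fv).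
have AN : A N.-1.
  apply: sub => /=; rewrite S_val -/(V N.-1) V_top sqrtr1.
  by apply/negP; rewrite -ltNge.
have := Pval_ge (leq_pred N) AN; rewrite -lee_fin -PPpE PA leNgt lte_fin w_gt0 //.
Qed.
End measure_part.

Lemma exp_bound (R : realType) (a y : R) (N : nat) : 0 < a -> a < 1 ->
  N%:R * a / (1 - a) < y -> expR (- y) < (1 - a) ^+ N.
Proof.
move=> a0 a1 hy.
have a1' : 0 < 1 - a by lra.
have h1 : expR (- (a / (1 - a))) <= 1 - a.
  rewrite expRN -[X in _ <= X]invrK lef_pV2 ?posrE ?expR_gt0 ?invr_gt0 //.
  have e : (1 - a)^-1 = 1 + a / (1 - a).
    by field; rewrite lt0r_neq0.
  rewrite [X in X <= _]e; exact: expR_ge1Dx.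
apply: (@lt_le_trans _ _ (expR (N%:R * (- (a / (1 - a)))))).
  by rewrite ltr_expR mulrN mulrA ltrN2.
rewrite expRM_natl; apply: lerXn2r => //; rewrite nnegrE ?expR_ge0 //; exact: ltW.
Qed.

Lemma numeric1 (R : realType) (c alpha lam : R) :
  1 < c -> 0 < alpha -> alpha < (c - 1) / (2 * c) ->
  4 / (c - 1) + 4 / (alpha ^+ 2 * (c - 1)) + 1 < lam ->
  let L := lam ^+ 2 in
  let N := (Num.truncn ((3 + c) / 4 * L)).+1 in
  let K := (N.-1)%:R * alpha ^+ 2 + (1 - alpha) ^+ 2 in
  [/\ N%:R * alpha / (1 - alpha) < c * alpha * L ,
      lam < N%:R * alpha * (Num.sqrt K)^-1 & 0 < K].
Proof.
move=> c1 a0 ac hl L N K.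
have c0 : 0 < c by lra.
have hA : alpha * (2 * c) < c - 1 by rewrite -ltr_pdivlMr // mulr_gt0.
have p0 : 0 <= 4 / (c - 1) by apply: divr_ge0; lra.
have q0 : 0 <= 4 / (alpha ^+ 2 * (c - 1)) by apply: divr_ge0; [lra| apply: mulr_ge0; [exact: sqr_ge0|lra]].
have lam1 : 1 < lam by lra.
have hL : lam < L by rewrite /L expr2; nra.
have hp : 4 < L * (c - 1).
  have : 4 / (c - 1) < L by lra.
  by rewrite ltr_pdivrMr; lra.
have hq : 4 < L * (alpha ^+ 2 * (c - 1)).
  have : 4 / (alpha ^+ 2 * (c - 1)) < L by lra.
  rewrite ltr_pdivrMr //; apply: mulr_gt0; [exact: exprn_gt0|lra].
have L0 : 0 < L by lra.
have [hN1 hN2] : (3 + c) / 4 * L < N%:R /\ N%:R <= (3 + c) / 4 * L + 1.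
  have /andP[h1 h2] : ((Num.truncn ((3 + c) / 4 * L))%:R <= (3 + c) / 4 * L < (Num.truncn ((3 + c) / 4 * L)).+1%:R).
    apply: truncn_itv; apply: mulr_ge0; [|lra]; apply: divr_ge0; lra.
  rewrite /N; move: h1 h2; set t := Num.truncn _ => h1 h2.
  rewrite -[t.+1%:R]natr1 in h2 *; split; lra.
have hNc' : N%:R < c * (1 - alpha) * L by nra.
have a1 : alpha < 1 by nra.
have K0 : 0 < K.
  rewrite /K; apply: ltr_wpDl; first by apply: mulr_ge0 => //; exact: sqr_ge0.
  apply: exprn_gt0; lra.
split => //.
- rewrite ltr_pdivrMr; last by lra.
  nra.
have sK0 : 0 < Num.sqrt K by rewrite sqrtr_gt0.
have eK : K = (N%:R - 1) * alpha ^+ 2 + (1 - alpha) ^+ 2.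
  have eN : (N%:R : R) = (N.-1)%:R + 1 by rewrite natr1.
  by rewrite /K eN addrK.
have X0 : 0 < (N%:R : R) by rewrite ltr0n.
have h1 : N%:R - L > (c - 1) * L / 4 by lra.
have h2 : N%:R * alpha ^+ 2 * (c - 1) > 4.
  have : L * (alpha ^+ 2 * (c - 1)) <= N%:R * (alpha ^+ 2 * (c - 1)).
    rewrite ler_pM2r; [lra| apply: mulr_gt0; [exact: exprn_gt0|lra]].
  rewrite mulrA in hq *; lra.
have Y0 : 0 < N%:R * alpha ^+ 2 by rewrite mulr_gt0 // exprn_gt0.
have p1 : N%:R * alpha ^+ 2 * ((c - 1) * L / 4) < N%:R * alpha ^+ 2 * (N%:R - L).
  by rewrite ltr_pM2l.
have p2 : L * 4 < L * (N%:R * alpha ^+ 2 * (c - 1)) by rewrite ltr_pM2l.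
have h3 : N%:R * alpha ^+ 2 * (N%:R - L) > L by nra.
have hK : L * K < (N%:R * alpha) ^+ 2.
  have : L * K <= L * (N%:R * alpha ^+ 2 + 1).
    by rewrite ler_pM2l // eK; nra.
  rewrite exprMn; nra.
rewrite ltr_pdivlMr //.
have lam0 : 0 < lam by lra.
have sq : Num.sqrt K ^+ 2 = K by rewrite sqr_sqrtr // ltW.
have : 0 < lam * Num.sqrt K + N%:R * alpha.
  by apply: addr_gt0; apply: mulr_gt0.
rewrite /L in hK; nra.
Qed.

Theorem theorem6p1 (R : realType) (c : R) (hc : 1 < c) :
  exists alpha0 : R, 0 < alpha0 /\
  forall alpha : R, 0 < alpha -> alpha < alpha0 ->
  exists lambda0 : R, forall lambda : R, lambda0 < lambda ->
  exists (d : measure_display) (T : measurableType d) (P : probability T R)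
         (F D : nat -> set (set T)) (f : T -> R),
    [/\ atomic_filtration F D,
        homogeneous P D alpha,
        P.-integrable setT (EFin \o f) /\ fine (\int[P]_x (f x)%:E)%E = 0,
        ess_sup P (Sfun P D f) = 1%E &
        ((expR (- (c * alpha * lambda ^+ 2)))%:E < P [set x | (lambda < f x)%R])%E].
Proof.
exists ((c - 1) / (2 * c)); split.
  by apply: divr_gt0; lra.
move=> alpha a0 aa0.
have c0 : 0 < c by lra.
have hA : alpha * (2 * c) < c - 1 by rewrite -ltr_pdivlMr // mulr_gt0.
have ahalf : alpha <= 2^-1 by nra.
exists (4 / (c - 1) + 4 / (alpha ^+ 2 * (c - 1)) + 1) => lam hlam.
have H := numeric1 hc a0 aa0 hlam; simpl in H.
case: H.
set N := (Num.truncn _).+1 => h1 h2 K0.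
set s := (Num.sqrt _)^-1 in h2.
exists _, (TT N), (PPp alpha N), (Fam N), (Dn N), (fv alpha s N).
split.
- exact: atomicF.
- by apply: homog.
- by split; [apply: fv_int | apply: fv_mean].
- apply: ess => //.
  rewrite /s exprVn sqr_sqrtr ?ltW // mulVf //; exact: lt0r_neq0.
- rewrite (PPpE a0 ahalf) lte_fin.
  apply: (@lt_le_trans _ _ (w alpha N N)).
    rewrite /w ltnn; apply: exp_bound => //; lra.
  apply: (Pval_ge a0 ahalf (leqnn N)).
  by rewrite /= /fv ltnn.
Qed.
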